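(* Let $W\subset\mathbb R^d$ be nonempty, closed and convex, $F:\mathbb R^d\to\mathbb R$ convex and differentiable, $\mathbf w_0\in W$, $\mu_0>0$, $J\ge1$, and $\mu_j=2\mu_{j-1}$ for $j=1,\dots,J$. Let $\hat{\mathbf w}_1,\dots,\hat{\mathbf w}_J$ be random points of $W$ with finite second moments. Define $F^{(0)}(\mathbf w)=F(\mathbf w)+\frac{\mu_0}{2}\|\mathbf w-\mathbf w_0\|^2$ and $F^{(j)}(\mathbf w)=F^{(j-1)}(\mathbf w)+\frac{\mu_j}{2}\|\mathbf w-\hat{\mathbf w}_j\|^2$ for $j=1,\dots,J$, and let $\mathbf w_j^\star$ be the (random) minimizer of $F^{(j)}$ over $W$. Suppose that for every $j=1,\dots,J$, $\mathbb E[F^{(j-1)}(\hat{\mathbf w}_j)-F^{(j-1)}(\mathbf w_{j-1}^\star)]\le\delta_j$. Then $$\mathbb E\Big[\Big(\sum_{j=1}^J\mu_j\|\mathbf w_J^\star-\hat{\mathbf w}_j\|\Big)^2\Big]\le16J\sum_{j=1}^J\mu_j\delta_j.$$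
   Context: $\|\cdot\|$ is the Euclidean norm on $\mathbb R^d$. The functions $F^{(j)}$ are random since they depend on the random points $\hat{\mathbf w}_1,\dots,\hat{\mathbf w}_j$; each $F^{(j)}$ is strongly convex, so its minimizer over $W$ exists and is unique. *)

(* Defs.v *)
From HB Require Import structures.
From mathcomp Require Import all_boot all_order all_algebra.
From mathcomp Require Import all_classical all_reals all_analysis.
Set Implicit Arguments. Unset Strict Implicit. Unset Printing Implicit Defensive.
Import Order.TTheory GRing.Theory Num.Theory.
Import numFieldNormedType.Exports.
Local Open Scope ring_scope.
Local Open Scope classical_set_scope.

Definition enorm {R : realType} {d : nat} (v : 'rV[R]_d) : R :=
  Num.sqrt (\sum_(i < d) v ord0 i ^+ 2).

Definition convex_fun {R : realType} {d : nat} (F : 'rV[R]_d -> R) : Prop :=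
  forall x y (t : R), 0 <= t -> t <= 1 ->
    F (t *: x + (1 - t) *: y) <= t * F x + (1 - t) * F y.

Fixpoint Freg {R : realType} {d : nat} {T : Type}
  (F : 'rV[R]_d -> R) (mu : nat -> R) (w0 : 'rV[R]_d)
  (what : nat -> T -> 'rV[R]_d) (j : nat) (omega : T) (w : 'rV[R]_d) : R :=
  match j with
  | 0 => F w + mu 0%N / 2 * enorm (w - w0) ^+ 2
  | k.+1 => Freg F mu w0 what k omega w
            + mu k.+1 / 2 * enorm (w - what k.+1 omega) ^+ 2
  end.

(* Main.v *)
Require Import Defs.
Set Warnings "-all".
From HB Require Import structures.
From mathcomp Require Import all_boot all_order all_algebra.
From mathcomp Require Import all_classical all_reals all_analysis.
From mathcomp Require Import ring lra.
From mathcomp Require Import measurable_realfun.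
Set Implicit Arguments. Unset Strict Implicit. Unset Printing Implicit Defensive.
Import Order.TTheory GRing.Theory Num.Theory.
Import numFieldNormedType.Exports.
Local Open Scope ring_scope.
Local Open Scope classical_set_scope.
Section VecAlg.
Variables (R : realType) (d : nat).
Implicit Types (u v w : 'rV[R]_d).

Definition sq v : R := \sum_(i < d) v ord0 i ^+ 2.
Definition dot u v : R := \sum_(i < d) u ord0 i * v ord0 i.

Lemma sq_ge0 v : 0 <= sq v.
Proof. by apply: sumr_ge0 => i _; rewrite sqr_ge0. Qed.

Lemma enorm_ge0 v : 0 <= enorm v.
Proof. exact: sqrtr_ge0. Qed.

Lemma enorm_sq v : enorm v ^+ 2 = sq v.
Proof. by rewrite /enorm sqr_sqrtr // sq_ge0. Qed.

Lemma sq_comb a b u v :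
  sq (a *: u + b *: v) = a ^+ 2 * sq u + 2 * a * b * dot u v + b ^+ 2 * sq v.
Proof.
rewrite /sq /dot !mulr_sumr -!big_split /=; apply: eq_bigr => i _.
by rewrite !mxE; ring.
Qed.

Lemma sqN v : sq (- v) = sq v.
Proof. by apply: eq_bigr => i _; rewrite mxE sqrrN. Qed.

Lemma dotC u v : dot u v = dot v u.
Proof. by apply: eq_bigr => i _; rewrite mulrC. Qed.

Lemma sqD u v : sq (u + v) = sq u + 2 * dot u v + sq v.
Proof. by have := sq_comb 1 1 u v; rewrite !scale1r; lra. Qed.

Lemma sqB u v : sq (u - v) = sq u - 2 * dot u v + sq v.
Proof.
have := sq_comb 1 (-1) u v; rewrite !scale1r scaleN1r => ->; lra.
Qed.

Lemma dotBl u v w : dot (u - v) w = dot u w - dot v w.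
Proof.
by rewrite /dot -sumrB; apply: eq_bigr => i _; rewrite !mxE; ring.
Qed.

Lemma dotBr u v w : dot w (u - v) = dot w u - dot w v.
Proof. by rewrite dotC dotBl !(dotC w). Qed.

Lemma CS2 u v : dot u v ^+ 2 <= sq u * sq v.
Proof.
set A := sq u; set B := sq v; set C := dot u v.
have h1 := sq_ge0 (B *: u + (- C) *: v); rewrite sq_comb -/A -/B -/C in h1.
have h2 := sq_ge0 ((- C) *: u + A *: v); rewrite sq_comb -/A -/B -/C in h2.
have h3 := sq_ge0 (1 *: u + 1 *: v); rewrite sq_comb -/A -/B -/C in h3.
have h4 := sq_ge0 (1 *: u + (-1) *: v); rewrite sq_comb -/A -/B -/C in h4.
have hA : 0 <= A := sq_ge0 u. have hB : 0 <= B := sq_ge0 v.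
have [B0|B0] := eqVneq B 0.
  have [A0|A0] := eqVneq A 0.
    rewrite A0 B0 in h3 h4 *. have : C = 0 by nra. by move=> ->; nra.
  have Ap : 0 < A by rewrite lt_def A0.
  have : A * (A * B - C ^+ 2) >= 0 by nra.
  by rewrite pmulr_rge0 // subr_ge0 mulrC.
have Bp : 0 < B by rewrite lt_def B0.
have : B * (A * B - C ^+ 2) >= 0 by nra.
by rewrite pmulr_rge0 // subr_ge0.
Qed.

Lemma CS u v : dot u v <= enorm u * enorm v.
Proof.
rewrite /enorm -sqrtrM ?sq_ge0 //.
apply: le_trans (ler_wsqrtr (CS2 u v)).
by rewrite sqrtr_sqr ler_norm.
Qed.

Lemma enormN v : enorm (- v) = enorm v.
Proof. by rewrite /enorm -/(sq _) sqN. Qed.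

Lemma enormB u v : enorm (u - v) = enorm (v - u).
Proof. by rewrite -enormN opprB. Qed.

Lemma le_enorm a b : 0 <= b -> sq a <= b ^+ 2 -> enorm a <= b.
Proof.
move=> b0 h; rewrite /enorm -/(sq a).
by apply: le_trans (ler_wsqrtr h) _; rewrite sqrtr_sqr ger0_norm.
Qed.

Lemma enormD u v : enorm (u + v) <= enorm u + enorm v.
Proof.
apply: le_enorm; first by rewrite addr_ge0 ?enorm_ge0.
rewrite sqD sqrrD !enorm_sq; have := CS u v; lra.
Qed.

Lemma enorm_tri u v w : enorm (u - w) <= enorm (u - v) + enorm (v - w).
Proof. by apply: le_trans (enormD _ _); rewrite addrA subrK. Qed.

Lemma coord_le v i : `|v ord0 i| <= enorm v.
Proof.
rewrite /enorm -sqrtr_sqr; apply: ler_wsqrtr.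
rewrite (bigD1 i) //= lerDl; apply: sumr_ge0 => j _; exact: sqr_ge0.
Qed.

End VecAlg.
Section SCvx.
Variables (R : realType) (d : nat).
Implicit Types (u v w a b p : 'rV[R]_d).

Definition SC (G : 'rV[R]_d -> R) (lam : R) := forall a b (t : R), 0 <= t -> t <= 1 ->
  G (t *: a + (1 - t) *: b) <= t * G a + (1 - t) * G b - lam / 2 * (t * (1 - t)) * sq (a - b).

Lemma sq_conv a b p t : sq (t *: a + (1 - t) *: b - p) =
  t * sq (a - p) + (1 - t) * sq (b - p) - t * (1 - t) * sq (a - b).
Proof.
rewrite /sq !mulr_sumr -big_split -sumrB /=; apply: eq_bigr => i _.
rewrite !mxE; ring.
Qed.

Lemma SC_quad (c : R) p : SC (fun w => c / 2 * enorm (w - p) ^+ 2) c.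
Proof.
move=> a b t _ _; rewrite !enorm_sq sq_conv; rewrite le_eqVlt; apply/orP; left; apply/eqP; ring.
Qed.

Lemma SC_add G1 G2 l1 l2 : SC G1 l1 -> SC G2 l2 -> SC (fun w => G1 w + G2 w) (l1 + l2).
Proof.
move=> h1 h2 a b t t0 t1; have := h1 a b t t0 t1; have := h2 a b t t0 t1.
have : 0 <= t * (1 - t) * sq (a - b).
  by rewrite mulr_ge0 ?sq_ge0 // mulr_ge0 // subr_ge0.
move=> h; lra.
Qed.

Lemma SC_convex (F : 'rV[R]_d -> R) : convex_fun F -> SC F 0.
Proof.
move=> cF a b t t0 t1; have := cF a b t t0 t1; lra.
Qed.

Lemma SC_growth (G : 'rV[R]_d -> R) lam (W : set 'rV[R]_d) a b :
  SC G lam -> 0 <= lam -> convex_set W -> W a ->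
  (forall v, W v -> G a <= G v) -> W b ->
  lam / 2 * sq (a - b) <= G b - G a.
Proof.
move=> sG l0 cW Wa amin Wb.
have key t : 0 < t -> t <= 1 -> (1 - t) * (lam / 2 * sq (a - b)) <= G b - G a.
  move=> t0 t1.
  have Wp : W (t *: b + (1 - t) *: a).
    have := cW b a (Itv01 (ltW t0) t1) (mem_set Wb) (mem_set Wa).
    by rewrite inE /conv /=.
  have h1 := amin _ Wp.
  have h2 := sG b a t (ltW t0) t1.
  have sqs : sq (b - a) = sq (a - b) by rewrite -sqN opprB.
  rewrite sqs in h2.
  have : t * ((1 - t) * (lam / 2 * sq (a - b))) <= t * (G b - G a) by nra.
  by rewrite ler_pM2l.
set X := G b - G a; set Y := lam / 2 * sq (a - b).
have Y0 : 0 <= Y by rewrite mulr_ge0 ?sq_ge0 ?divr_ge0.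
have X0 : 0 <= X by rewrite subr_ge0 amin.
rewrite leNgt; apply/negP => XY.
have Yp : 0 < Y by lra.
have t0 : 0 < (Y - X) / (2 * Y).
  by apply: divr_gt0; [lra | rewrite mulr_gt0].
have t1 : (Y - X) / (2 * Y) <= 1.
  rewrite ler_pdivrMr; first lra. by rewrite mulr_gt0.
have := key _ t0 t1.
have e : (Y - X) / (2 * Y) * Y = (Y - X) / 2 by field; rewrite gt_eqF.
move: e; set t := (Y - X) / (2 * Y) => e.
rewrite mulrBl mul1r e -/Y -/X; lra.
Qed.

End SCvx.
Section Freg_props.
Variables (R : realType) (d : nat) (T : Type) (F : 'rV[R]_d -> R) (mu : nat -> R)
  (w0 : 'rV[R]_d) (what : nat -> T -> 'rV[R]_d).

Definition lam (k : nat) : R := \sum_(0 <= i < k.+1) mu i.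

Lemma Freg_SC k x : convex_fun F -> SC (Freg F mu w0 what k x) (lam k).
Proof.
move=> cF; elim: k => [|k IH].
  have h := SC_add (SC_convex cF) (SC_quad (mu 0%N) w0); rewrite add0r in h.
  rewrite /lam big_nat1; move=> a b t t0 t1; exact: h.
have h := SC_add IH (SC_quad (mu k.+1) (what k.+1 x)).
have -> : lam k.+1 = lam k + mu k.+1 by rewrite /lam (@big_nat_recr _ _ _ k.+1).
move=> a b t t0 t1; exact: h.
Qed.

Lemma FregS k x v : Freg F mu w0 what k.+1 x v =
  Freg F mu w0 what k x v + mu k.+1 / 2 * enorm (v - what k.+1 x) ^+ 2.
Proof. by []. Qed.

End Freg_props.

Lemma sum_sq_le (R : realType) (n : nat) (f : nat -> R) :
  (\sum_(1 <= j < n.+1) f j) ^+ 2 <= n%:R * \sum_(1 <= j < n.+1) f j ^+ 2.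
Proof.
elim: n => [|n IH]; first by rewrite big_geq // expr0n /= mul0r.
set S := \sum_(1 <= j < n.+1) f j in IH *.
set Q := \sum_(1 <= j < n.+1) f j ^+ 2 in IH *.
have e1 : \sum_(1 <= j < n.+2) f j = S + f n.+1 by rewrite big_nat_recr.
have e2 : \sum_(1 <= j < n.+2) f j ^+ 2 = Q + f n.+1 ^+ 2 by rewrite big_nat_recr.
rewrite e1 e2.
have Q0 : 0 <= Q by apply: sumr_ge0 => j _; exact: sqr_ge0.
have [n0|np] := eqVneq n 0%N.
  have S0 : S = 0 by rewrite /S n0 big_geq.
  have Q00 : Q = 0 by rewrite /Q n0 big_geq.
  rewrite n0 S0 Q00; lra.
have npos : 0 < n%:R :> R by rewrite ltr0n lt0n.
have hh := sqr_ge0 (S - n%:R * f n.+1).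
have h : n%:R * (2 * S * f n.+1) <= n%:R * (Q + n%:R * f n.+1 ^+ 2).
  move: hh; rewrite sqrrB; nra.
have h2 : 2 * S * f n.+1 <= Q + n%:R * f n.+1 ^+ 2 by rewrite -(ler_pM2l npos).
rewrite -natr1 sqrrD; nra.
Qed.
Lemma ler_sumn (R : numDomainType) m n (f g : nat -> R) :
  (forall i, (m <= i < n)%N -> f i <= g i) ->
  \sum_(m <= i < n) f i <= \sum_(m <= i < n) g i.
Proof.
move=> h; rewrite big_nat_cond [X in _ <= X]big_nat_cond.
by apply: ler_sum => i /andP[hi _]; exact: h.
Qed.

Section Pointwise.
Variables (R : realType) (d : nat) (W : set 'rV[R]_d) (F : 'rV[R]_d -> R)
  (w0 : 'rV[R]_d) (mu : nat -> R) (J : nat) (T : Type)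
  (what wstar : nat -> T -> 'rV[R]_d) (x : T).
Hypothesis cW : convex_set W.
Hypothesis cF : convex_fun F.
Hypothesis mu0 : 0 < mu 0%N.
Hypothesis hmu : forall j, (1 <= j <= J)%N -> mu j = 2 * mu j.-1.
Hypothesis Wp : forall j, (1 <= j <= J)%N -> W (what j x).
Hypothesis hmin : forall j, (j <= J)%N -> W (wstar j x) /\
  (forall v, W v -> Freg F mu w0 what j x (wstar j x) <= Freg F mu w0 what j x v).

Local Notation G k := (Freg F mu w0 what k x).
Local Notation ws k := (wstar k x).
Local Notation D j := (enorm (ws j.-1 - what j x)).
Local Notation Dl j := (G j.-1 (what j x) - G j.-1 (ws j.-1)).

Lemma mu_ge0 j : (j <= J)%N -> 0 <= mu j.
Proof.
elim: j => [|j IH] hj; first exact: ltW.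
rewrite hmu /=; last by rewrite hj.
by rewrite mulr_ge0 // IH // ltnW.
Qed.

Lemma lam_ge0 k : (k <= J)%N -> 0 <= lam mu k.
Proof.
move=> hk; rewrite /lam big_nat_cond; apply: sumr_ge0 => i /andP[/andP[_ hi] _]; apply: mu_ge0.
exact: leq_trans hk.
Qed.

Lemma lam_split k : lam mu k.+1 = mu 0%N + \sum_(1 <= i < k.+2) mu i.
Proof. by rewrite /lam big_ltn. Qed.

Lemma lamS k : lam mu k.+1 = lam mu k + mu k.+1.
Proof. by rewrite /lam (@big_nat_recr _ _ _ k.+1). Qed.

Lemma F1 j : (1 <= j <= J)%N -> lam mu j.-1 / 2 * D j ^+ 2 <= Dl j.
Proof.
case/andP=> j1 jJ.
have hJ : (j.-1 <= J)%N by apply: leq_trans (leq_pred j) jJ.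
have [Wa amin] := hmin hJ.
rewrite enorm_sq; apply: (SC_growth (@Freg_SC _ _ _ F mu w0 what j.-1 x cF) (lam_ge0 hJ) cW Wa amin).
by apply: Wp; rewrite j1.
Qed.

Lemma F1' j : (1 <= j <= J)%N -> mu j ^+ 2 * D j ^+ 2 <= 4 * mu j * Dl j.
Proof.
move=> hj; have h := F1 hj; case/andP: hj => j1 jJ.
have hJ : (j.-1 <= J)%N by apply: leq_trans (leq_pred j) jJ.
have m1 : mu j.-1 <= lam mu j.-1.
  rewrite /lam (@big_nat_recr _ _ _ j.-1) //= lerDr big_nat_cond; apply: sumr_ge0 => i /andP[/andP[_ hi] _].
  apply: mu_ge0; exact: leq_trans (ltnW hi) hJ.
have e : mu j = 2 * mu j.-1 by rewrite hmu // j1.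
have m0 := mu_ge0 jJ. have m10 := mu_ge0 hJ.
have D0 : 0 <= D j ^+ 2 by exact: sqr_ge0.
set X := D j ^+ 2 in h D0 *.
have h1 : mu j.-1 * (lam mu j.-1 / 2 * X) <= mu j.-1 * Dl j by rewrite ler_wpM2l.
have h2 : mu j.-1 * mu j.-1 * X <= mu j.-1 * lam mu j.-1 * X.
  by rewrite ler_wpM2r // ler_wpM2l.
rewrite e; nra.
Qed.

Lemma F2 i : (1 <= i <= J)%N ->
  lam mu i * enorm (ws i - ws i.-1) <= mu i * D i.
Proof.
case: i => [//|k] /andP[_ kJ] /=.
have kJ' : (k <= J)%N := ltnW kJ.
have [Wa amin] := hmin kJ'.
have [Wb bmin] := hmin kJ.
have g1 := SC_growth (@Freg_SC _ _ _ F mu w0 what k.+1 x cF) (lam_ge0 kJ) cW Wb bmin Wa.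
have g2 := SC_growth (@Freg_SC _ _ _ F mu w0 what k x cF) (lam_ge0 kJ') cW Wa amin Wb.
rewrite !FregS in g1.
set a := ws k in g1 g2 *; set b := ws k.+1 in g1 g2 *; set p := what k.+1 x in g1 *.
have E1 : sq (b - a) = sq (a - b) by rewrite -sqN opprB.
have E2 : b - p = (a - p) - (a - b).
  by apply/matrixP => i l; rewrite !mxE; ring.
rewrite E1 !enorm_sq E2 (sqB (a - p) (a - b)) lamS in g1.
have cs := CS (a - p) (a - b).
rewrite lamS.
have m0 : 0 <= mu k.+1 := mu_ge0 kJ.
have l0 : 0 <= lam mu k := lam_ge0 kJ'.
set e := enorm (b - a).
have ee : enorm (a - b) = e by rewrite enormB.
rewrite ee in cs.
have E3 : sq (a - b) = e ^+ 2 by rewrite -ee enorm_sq.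
rewrite E3 in g1 g2.
set Dd := enorm (a - p) in cs *.
set dt := dot (a - p) (a - b) in g1 cs.
have key : (lam mu k + mu k.+1) * e ^+ 2 <= mu k.+1 * Dd * e.
  have : mu k.+1 * dt <= mu k.+1 * (Dd * e) by rewrite ler_wpM2l.
  lra.
have e0 : 0 <= e by exact: enorm_ge0.
have D0 : 0 <= Dd by exact: enorm_ge0.
have [ez|ep] := eqVneq e 0; first by rewrite ez mulr0 mulr_ge0.
have epos : 0 < e by rewrite lt_def ep e0.
rewrite -(ler_pM2r epos); nra.
Qed.

Lemma chain K : (K <= J)%N ->
  \sum_(1 <= j < K.+1) mu j * enorm (ws K - ws j.-1) <= \sum_(1 <= j < K.+1) mu j * D j.
Proof.
elim: K => [|K IH] hK; first by rewrite !big_geq.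
have hK' : (K <= J)%N := ltnW hK.
rewrite (@big_nat_recr _ _ _ K.+1) // [X in _ <= X](@big_nat_recr _ _ _ K.+1) //=.
set e := enorm (ws K.+1 - ws K).
have h1 : \sum_(1 <= j < K.+1) mu j * enorm (ws K.+1 - ws j.-1) <=
    \sum_(1 <= j < K.+1) (mu j * e + mu j * enorm (ws K - ws j.-1)).
  apply: ler_sumn => j /andP[_ hj]; rewrite -mulrDr; apply: ler_wpM2l.
    by apply: mu_ge0; exact: leq_trans (ltnW hj) hK.
  exact: enorm_tri.
rewrite big_split /= -mulr_suml in h1.
have h2 := IH hK'.
have h3 := F2 (i:=K.+1) hK.
have h4 : \sum_(1 <= j < K.+1) mu j + mu K.+1 <= lam mu K.+1.
  by rewrite lam_split (@big_nat_recr _ _ _ K.+1) //= lerDr; exact: ltW.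
have e0 : 0 <= e := enorm_ge0 _.
have h5 : (\sum_(1 <= j < K.+1) mu j + mu K.+1) * e <= lam mu K.+1 * e by rewrite ler_wpM2r.
simpl in h3; rewrite -/e in h3.
lra.
Qed.

Lemma pointwise :
  (\sum_(1 <= j < J.+1) mu j * enorm (ws J - what j x)) ^+ 2 <=
  16 * J%:R * \sum_(1 <= j < J.+1) mu j * Dl j.
Proof.
set X := \sum_(1 <= j < J.+1) mu j * D j.
have s1 : \sum_(1 <= j < J.+1) mu j * enorm (ws J - what j x) <= 2 * X.
  apply: (@le_trans _ _ (\sum_(1 <= j < J.+1) (mu j * enorm (ws J - ws j.-1) + mu j * D j))).
    apply: ler_sumn => j /andP[_ hj]; rewrite -mulrDr; apply: ler_wpM2l.
      exact: mu_ge0.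
    exact: enorm_tri.
  rewrite big_split /=; have := chain (leqnn J); rewrite -/X; lra.
have s0 : 0 <= \sum_(1 <= j < J.+1) mu j * enorm (ws J - what j x).
  rewrite big_nat_cond; apply: sumr_ge0 => j /andP[/andP[_ hj] _].
  by rewrite mulr_ge0 ?enorm_ge0 // mu_ge0.
have s2 : (\sum_(1 <= j < J.+1) mu j * enorm (ws J - what j x)) ^+ 2 <= 4 * X ^+ 2.
  have : (\sum_(1 <= j < J.+1) mu j * enorm (ws J - what j x)) ^+ 2 <= (2 * X) ^+ 2.
    by rewrite ler_pXn2r // ?nnegrE //; lra.
  by rewrite exprMn; lra.
have s3 := sum_sq_le J (fun j => mu j * D j); rewrite -/X in s3.
have s4 : \sum_(1 <= j < J.+1) (mu j * D j) ^+ 2 <= \sum_(1 <= j < J.+1) (4 * (mu j * Dl j)).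
  apply: ler_sumn => j hj; rewrite exprMn mulrA; exact: F1'.
rewrite -mulr_sumr in s4.
have J0 : 0 <= J%:R :> R by [].
have s5 : J%:R * \sum_(1 <= j < J.+1) (mu j * D j) ^+ 2 <=
    J%:R * (4 * \sum_(1 <= j < J.+1) mu j * Dl j) by rewrite ler_wpM2l.
nra.
Qed.

End Pointwise.
Section MeasPrinciple.
Variables (d0 : measure_display) (T : measurableType d0) (R : realType)
  (I : finType) (c : I -> T -> R).
Hypothesis mc : forall k, measurable_fun setT (c k).

Definition seqcont (h : T -> R) := forall x (u : nat -> T),
  (forall k, (fun n => c k (u n)) @ \oo --> c k x) ->
  (fun n => h (u n)) @ \oo --> h x.

Lemma epsdelta h : seqcont h -> forall x e, 0 < e -> exists m : nat,
  forall y, (forall k, `|c k y - c k x| < m.+1%:R^-1) -> `|h y - h x| < e.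
Proof.
move=> hc x e e0; apply: contrapT => H.
have H' : forall m : nat, exists y, (forall k, `|c k y - c k x| < m.+1%:R^-1) /\
    e <= `|h y - h x|.
  move=> m; apply: contrapT => nm; apply: H; exists m => y Ay.
  apply: contrapT => nB; apply: nm; exists y; split => //.
  by rewrite leNgt; apply/negP.
have [u hu] := choice H'.
have cv : forall k, (fun n => c k (u n)) @ \oo --> c k x.
  move=> k; apply/cvgrPdist_lt => eps eps0.
  have := near_infty_natSinv_lt (PosNum eps0).
  apply: filterS => n /= hn; rewrite distrC.
  exact: lt_trans ((hu n).1 k) hn.
have := hc x u cv; move/cvgrPdist_lt/(_ e e0) => [N _ hN].
have := hN N (leqnn N); rewrite distrC ltNge => /negP; apply.
exact: (hu N).2.
Qed.

Definition Box (i : {ffun I -> rat} * nat) : set T :=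
  [set y | \sum_k `|c k y - ratr (i.1 k)| < i.2.+1%:R^-1].

Lemma Box_measurable i : measurable (Box i).
Proof.
have mf : measurable_fun setT (fun y => \sum_(k <- enum I) `|c k y - ratr (i.1 k)|).
  apply: measurable_sum => k; apply: measurableT_comp => //.
  apply: measurable_funB => //; exact: measurable_cst.
have := mf measurableT _ (@measurable_itv _ `]-oo, i.2.+1%:R^-1[%R).
rewrite setTI; congr measurable; apply/seteqP; split => y /=;
  rewrite in_itv /= big_enum //=.
Qed.

Lemma seqcont_measurable h : seqcont h -> measurable_fun setT h.
Proof.
move=> hc; apply: (measurability _ (RGenOInfty.measurableE R)) => //.
move=> /= A [B [a hB] hA]; rewrite -hA hB preimage_itvoy.
pose good i := forall y, Box i y -> a < h y.
rewrite [X in measurable X](_ : _ = \bigcup_(i : {ffun I -> rat} * nat)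
   (if pselect (good i) then Box i else set0)).
  apply: countable_bigcupT_measurable => // i.
  by case: pselect => gi /=; [exact: Box_measurable|].
apply/seteqP; split => [x [_ /= ax]|y [i _]]; last first.
  by case: pselect => /= gi; [move=> By; split => //; exact: gi|].
have e0 : 0 < h x - a by rewrite subr_gt0.
have [m hm] := epsdelta hc x e0.
set r := ((m.*2).+2%:R : R)^-1.
have r0 : 0 < r by rewrite invr_gt0 ltr0n.
set N := #|I|.
have rN : 0 < r / N.+1%:R by rewrite divr_gt0 ?ltr0n.
have ex : forall k, exists q : rat, `|ratr q - c k x| < r / N.+1%:R.
  move=> k; have hlt : c k x - r / N.+1%:R < c k x + r / N.+1%:R.
    by rewrite ltrBlDr -addrA ltrDl addr_gt0.
  have [q] := rat_in_itvoo hlt.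
  rewrite in_itv /= => /andP[h1 h2]; exists q.
  move: h1 h2; set t := r / N.+1%:R; set z := ratr q => h1 h2.
  rewrite ltr_norml; apply/andP; split; lra.
have [qf hq] := choice ex.
set q := [ffun k => qf k].
have Bx : Box (q, m.*2.+1) x.
  rewrite /Box /=.
  apply: (@le_lt_trans _ _ (\sum_(k : I) r / N.+1%:R)).
    by apply: ler_sum => k _; rewrite ffunE distrC ltW.
  rewrite sumr_const -/N -/r -(mulr_natr (r / _) N) -mulrA gtr_pMr // mulrC ltr_pdivrMr ?ltr0n //.
  by rewrite mul1r ltr_nat.
exists (q, m.*2.+1) => //; case: pselect => // ng; exfalso; apply: ng.
move=> y By.
have : `|h y - h x| < h x - a.
  apply: hm => k.
  have t1 : `|c k y - ratr (q k)| <= \sum_k0 `|c k0 y - ratr (q k0)|.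
    by rewrite (bigD1 k) //= lerDl sumr_ge0.
  have t2 : `|ratr (q k) - c k x| <= \sum_k0 `|c k0 x - ratr (q k0)|.
    by rewrite distrC (bigD1 k) //= lerDl sumr_ge0.
  have e2 : r + r = m.+1%:R^-1.
    have e3 : (m.*2.+2)%:R = 2 * m.+1%:R :> R by rewrite -doubleS -mul2n natrM.
    rewrite /r e3; field.
    by rewrite addrC natr1 pnatr_eq0.
  rewrite -e2.
  apply: le_lt_trans (ler_distD (ratr (q k)) (c k y) (c k x)) _.
  apply: ltrD.
    exact: le_lt_trans t1 By.
  exact: le_lt_trans t2 Bx.
move=> hh; move: (ler_norm (h x - h y)); rewrite distrC in hh.
rewrite distrC in hh; move: hh; rewrite ltr_norml => /andP[hh1 _].
lra.
Qed.

End MeasPrinciple.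
Lemma sq_diff_id (R : realType) (d : nat) (a b p q : 'rV[R]_d) :
  sq (a - q) - sq (a - p) - sq (b - q) + sq (b - p) = 2 * dot (a - b) (p - q).
Proof.
rewrite /sq /dot mulr_sumr -!sumrB -big_split /=; apply: eq_bigr => i _.
rewrite !mxE; ring.
Qed.

Section Lipschitz.
Variables (R : realType) (d : nat) (W : set 'rV[R]_d) (F : 'rV[R]_d -> R)
  (w0 : 'rV[R]_d) (mu : nat -> R) (J : nat) (T : Type)
  (what wstar : nat -> T -> 'rV[R]_d).
Hypothesis cW : convex_set W.
Hypothesis cF : convex_fun F.
Hypothesis mu0 : 0 < mu 0%N.
Hypothesis hmu : forall j, (1 <= j <= J)%N -> mu j = 2 * mu j.-1.
Hypothesis hmin : forall j, (j <= J)%N -> forall x, W (wstar j x) /\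
  (forall v, W v -> Freg F mu w0 what j x (wstar j x) <= Freg F mu w0 what j x v).

Lemma Dk_bound k (x y : T) (a b : 'rV[R]_d) : (k <= J)%N ->
  (Freg F mu w0 what k y a - Freg F mu w0 what k x a) -
  (Freg F mu w0 what k y b - Freg F mu w0 what k x b) <=
  enorm (a - b) * \sum_(1 <= i < k.+1) mu i * enorm (what i y - what i x).
Proof.
elim: k => [|k IH] hk.
  by rewrite big_geq //= mulr0; lra.
have IH' := IH (ltnW hk).
rewrite !FregS (@big_nat_recr _ _ _ k.+1) //= mulrDr.
have m0 : 0 <= mu k.+1.
  have := mu_ge0 mu0 hmu hk.
  by [].
have id := sq_diff_id a b (what k.+1 x) (what k.+1 y).
have cs := CS (a - b) (what k.+1 x - what k.+1 y).
rewrite (enormB (what k.+1 x)) in cs.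
rewrite !enorm_sq.
have : mu k.+1 * dot (a - b) (what k.+1 x - what k.+1 y) <=
  mu k.+1 * (enorm (a - b) * enorm (what k.+1 y - what k.+1 x)) by rewrite ler_wpM2l.
move: IH' id; set A := Freg _ _ _ _ k y a; set B := Freg _ _ _ _ k x a;
  set C := Freg _ _ _ _ k y b; set D := Freg _ _ _ _ k x b.
set s1 := sq (a - what k.+1 y); set s2 := sq (a - what k.+1 x);
  set s3 := sq (b - what k.+1 y); set s4 := sq (b - what k.+1 x).
set dt := dot _ _; set E := enorm (a - b); set S := \sum_(1 <= i < k.+1) _.
set M := mu k.+1; set N := enorm _.
move=> h1 h2 h3.
have -> : A + M / 2 * s1 - (B + M / 2 * s2) - (C + M / 2 * s3 - (D + M / 2 * s4)) =
  (A - B - (C - D)) + M / 2 * (s1 - s2 - s3 + s4) by ring.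
rewrite h2.
have -> : M / 2 * (2 * dt) = M * dt by field.
have -> : E * (M * N) = M * (E * N) by ring.
lra.
Qed.

Lemma lip k (x y : T) : (k <= J)%N ->
  lam mu k * enorm (wstar k y - wstar k x) <=
  \sum_(1 <= i < k.+1) mu i * enorm (what i y - what i x).
Proof.
move=> hk.
have [Wa amin] := hmin hk x.
have [Wb bmin] := hmin hk y.
have l0 : 0 <= lam mu k.
  exact: (lam_ge0 mu0 hmu hk).
have g1 := SC_growth (@Freg_SC _ _ _ F mu w0 what k x cF) l0 cW Wa amin Wb.
have g2 := SC_growth (@Freg_SC _ _ _ F mu w0 what k y cF) l0 cW Wb bmin Wa.
have hD := Dk_bound x y (wstar k x) (wstar k y) hk.
set a := wstar k x in g1 g2 hD *; set b := wstar k y in g1 g2 hD *.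
have E1 : sq (b - a) = sq (a - b) by rewrite -sqN opprB.
rewrite E1 -enorm_sq in g2; rewrite -enorm_sq in g1.
rewrite enormB.
set e := enorm (a - b) in g1 g2 hD *.
set S := \sum_(1 <= i < k.+1) _ in hD *.
have e0 : 0 <= e := enorm_ge0 _.
have S0 : 0 <= S.
  rewrite /S big_nat_cond; apply: sumr_ge0 => i /andP[/andP[_ hi] _].
  rewrite mulr_ge0 ?enorm_ge0 //.
  exact: (mu_ge0 mu0 hmu (leq_trans (ltnSE hi) hk)).
have key : lam mu k * e ^+ 2 <= e * S.
  move: g1 g2 hD.
  set A := Freg _ _ _ _ k y a; set B := Freg _ _ _ _ k x a;
  set C := Freg _ _ _ _ k y b; set D := Freg _ _ _ _ k x b.
  set L := lam mu k; move=> g1 g2 hD.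
  have : L * e ^+ 2 = L / 2 * e ^+ 2 + L / 2 * e ^+ 2 by field.
  move=> ->; lra.
have [ez|ep] := eqVneq e 0; first by rewrite ez mulr0.
have epos : 0 < e by rewrite lt_def ep e0.
rewrite -(ler_pM2r epos); nra.
Qed.

End Lipschitz.
Section SeqCvg.
Variable (R : realType).

Lemma cvg_sum_seq (I : eqType) (s : seq I) (f : I -> nat -> R) (a : I -> R) :
  (forall i, i \in s -> (fun n => f i n) @ \oo --> a i) ->
  (fun n => \sum_(i <- s) f i n) @ \oo --> \sum_(i <- s) a i.
Proof.
elim: s => [|i s IH] hf.
  rewrite big_nil; under eq_fun do rewrite big_nil; exact: cvg_cst.
rewrite big_cons; under eq_fun do rewrite big_cons.
apply: cvgD; first by apply: hf; rewrite mem_head.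
by apply: IH => j js; apply: hf; rewrite in_cons js orbT.
Qed.

Lemma cvg_sq (f : nat -> R) (a : R) : f @ \oo --> a -> (fun n => f n ^+ 2) @ \oo --> a ^+ 2.
Proof. move=> h; under eq_fun do rewrite expr2; rewrite expr2; exact: cvgM. Qed.

Variable d : nat.
Definition vcvg (v : nat -> 'rV[R]_d) (a : 'rV[R]_d) :=
  forall l, (fun n => v n ord0 l) @ \oo --> a ord0 l.

Lemma vcvgB v p a b : vcvg v a -> vcvg p b -> vcvg (fun n => v n - p n) (a - b).
Proof.
move=> hv hp l.
have -> : (fun n => (v n - p n) ord0 l) = (fun n => v n ord0 l - p n ord0 l).
  by apply: funext => n; rewrite !mxE.
have -> : (a - b) ord0 l = a ord0 l - b ord0 l by rewrite !mxE.
exact: cvgB.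
Qed.

Lemma vcvg_cst a : vcvg (fun _ => a) a.
Proof. by move=> l; exact: cvg_cst. Qed.

Lemma vcvg_sq v a : vcvg v a -> (fun n => sq (v n)) @ \oo --> sq a.
Proof. by move=> hv; apply: cvg_sum_seq => l _; apply: cvg_sq; exact: hv. Qed.

Lemma vcvg_enorm2 v a : vcvg v a -> (fun n => enorm (v n) ^+ 2) @ \oo --> enorm a ^+ 2.
Proof. by move=> hv; rewrite enorm_sq; under eq_fun do rewrite enorm_sq; exact: vcvg_sq. Qed.

Definition l1 (v : 'rV[R]_d) := \sum_(l < d) `|v ord0 l|.

Lemma l1_ge0 v : 0 <= l1 v.
Proof. by apply: sumr_ge0 => l _. Qed.

Lemma enorm_l1 v : enorm v <= l1 v.
Proof.
apply: le_enorm; first exact: l1_ge0.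
rewrite /sq expr2 {2}/l1 mulr_suml; apply: ler_sum => l _.
have hl : `|v ord0 l| <= l1 v by rewrite /l1 (bigD1 l) //= lerDl sumr_ge0.
by rewrite -real_normK ?num_real // expr2 ler_wpM2l.
Qed.

Lemma vcvg_enorm0 v a : vcvg v a -> (fun n => enorm (v n - a)) @ \oo --> 0.
Proof.
move=> hv.
apply: (@squeeze_cvgr _ _ _ _ (fun=> 0) (fun n => l1 (v n - a))).
- by near=> n; rewrite enorm_ge0 enorm_l1.
- exact: cvg_cst.
have : (fun n => \sum_(l < d) `|v n ord0 l - a ord0 l|) @ \oo -->
    \sum_(l < d) `|a ord0 l - a ord0 l|.
  apply: cvg_sum_seq => l _; apply: cvg_norm; apply: cvgB => //; exact: cvg_cst.
rewrite big1 => [|l _]; last by rewrite subrr normr0.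
have -> : (fun n => l1 (v n - a)) = (fun n => \sum_(l < d) `|v n ord0 l - a ord0 l|).
  by apply: funext => n; rewrite /l1; apply: eq_bigr => l _; rewrite !mxE.
by [].
Unshelve. all: by end_near.
Qed.

Lemma enorm_rev (u w : 'rV[R]_d) : `|enorm u - enorm w| <= enorm (u - w).
Proof.
have h1 : enorm u <= enorm (u - w) + enorm w by rewrite -{1}(subrK w u) enormD.
have h2 : enorm w <= enorm (w - u) + enorm u by rewrite -{1}(subrK u w) enormD.
rewrite enormB in h2; rewrite ler_norml; apply/andP; split; lra.
Qed.

Lemma enorm_cvg v a : vcvg v a -> (fun n => enorm (v n)) @ \oo --> enorm a.
Proof.
move=> hv; apply/cvgrPdist_lt => eps e0.
have := vcvg_enorm0 hv; move/cvgrPdist_lt/(_ eps e0); apply: filterS => n /=.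
rewrite sub0r normrN (ger0_norm (enorm_ge0 _)) => h; apply: le_lt_trans h.
by rewrite enormB; exact: enorm_rev.
Qed.

Lemma mxnorm_le (M : 'rV[R]_d) : `|M| <= enorm M.
Proof.
rewrite -[`|M|]/(mx_norm M) mx_normrE; apply: bigmax_le => [|ij _]; first exact: enorm_ge0.
by rewrite [ij.1]ord1; exact: coord_le.
Qed.

Lemma rv_cvg v a : vcvg v a -> v n @[n --> \oo] --> a.
Proof.
move=> hv; apply/cvgrPdist_lt => eps e0.
have := vcvg_enorm0 hv; move/cvgrPdist_lt/(_ eps e0); apply: filterS => n /=.
rewrite sub0r normrN (ger0_norm (enorm_ge0 _)) => h; apply: le_lt_trans h.
by rewrite enormB; exact: mxnorm_le.
Qed.

Lemma F_cvg (F : 'rV[R]_d -> R) v a : (forall x, differentiable F x) -> vcvg v a ->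
  (fun n => F (v n)) @ \oo --> F a.
Proof.
move=> dF hv; exact: (continuous_cvg _ (differentiable_continuous (dF a)) (rv_cvg hv)).
Qed.

End SeqCvg.
Section FregCvg.
Variables (R : realType) (d : nat) (W : set 'rV[R]_d) (F : 'rV[R]_d -> R)
  (w0 : 'rV[R]_d) (mu : nat -> R) (J : nat) (T : Type)
  (what wstar : nat -> T -> 'rV[R]_d) (x : T) (u : nat -> T).
Hypothesis cW : convex_set W.
Hypothesis cF : convex_fun F.
Hypothesis dF : forall x, differentiable F x.
Hypothesis mu0 : 0 < mu 0%N.
Hypothesis hmu : forall j, (1 <= j <= J)%N -> mu j = 2 * mu j.-1.
Hypothesis hmin : forall j, (j <= J)%N -> forall x, W (wstar j x) /\
  (forall v, W v -> Freg F mu w0 what j x (wstar j x) <= Freg F mu w0 what j x v).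
Hypothesis hw : forall j, (1 <= j <= J)%N -> vcvg (fun n => what j (u n)) (what j x).

Lemma Freg_cvg k v a : (k <= J)%N -> vcvg v a ->
  (fun n => Freg F mu w0 what k (u n) (v n)) @ \oo --> Freg F mu w0 what k x a.
Proof.
move=> + hv; elim: k => [|k IH] hk /=.
  apply: cvgD; first exact: F_cvg.
  apply: cvgM; first exact: cvg_cst.
  exact: vcvg_enorm2 (vcvgB hv (vcvg_cst (a:=w0))).
apply: cvgD; first exact: IH (ltnW hk).
apply: cvgM; first exact: cvg_cst.
exact: vcvg_enorm2 (vcvgB hv (hw (j:=k.+1) hk)).
Qed.

Lemma lam_gt0 k : (k <= J)%N -> 0 < lam mu k.
Proof.
move=> hk; rewrite /lam big_ltn // ltr_pwDl //.
rewrite big_nat_cond; apply: sumr_ge0 => i /andP[/andP[_ hi] _].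
exact: (mu_ge0 mu0 hmu (leq_trans (ltnSE hi) hk)).
Qed.

Lemma ws_cvg k : (k <= J)%N -> vcvg (fun n => wstar k (u n)) (wstar k x).
Proof.
move=> hk l.
have lp := lam_gt0 hk.
have hB : (fun n => \sum_(1 <= i < k.+1) mu i * enorm (what i (u n) - what i x)) @ \oo -->
    \sum_(1 <= i < k.+1) mu i * 0.
  apply: cvg_sum_seq => i; rewrite mem_index_iota => /andP[i1 hi].
  apply: cvgM; first exact: cvg_cst.
  apply: vcvg_enorm0; apply: hw; rewrite i1 /=; exact: leq_trans (ltnSE hi) hk.
rewrite big1 in hB => [|i _]; last by rewrite mulr0.
apply/cvgrPdist_lt => eps e0.
have ep : 0 < eps * lam mu k by rewrite mulr_gt0.
move/cvgrPdist_lt/(_ _ ep): hB; apply: filterS => n /=.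
rewrite sub0r normrN => h.
have hl := lip cW cF mu0 hmu hmin x (u n) hk.
have h1 : `|wstar k x ord0 l - wstar k (u n) ord0 l| <= enorm (wstar k (u n) - wstar k x).
  by rewrite distrC; have := coord_le (wstar k (u n) - wstar k x) l; rewrite !mxE.
have h2 := ler_norm (\sum_(1 <= i < k.+1) mu i * enorm (what i (u n) - what i x)).
move: h1 h2 h hl.
set A := `|_ - _|; set E := enorm _; set S := \sum_(1 <= i < k.+1) _; set L := lam mu k.
move=> h1 h2 h hl.
have h3 : L * A <= L * E by rewrite ler_wpM2l // ltW.
have : L * A < L * eps by rewrite [L * eps]mulrC; lra.
by rewrite ltr_pM2l.
Qed.

End FregCvg.
Unset Implicit Arguments.
Theorem lemmaC1 (R : realType) (d : nat) (W : set 'rV[R]_d)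
  (F : 'rV[R]_d -> R) (w0 : 'rV[R]_d) (mu : nat -> R) (J : nat)
  (dT : measure_display) (T : measurableType dT) (P : probability T R)
  (what : nat -> T -> 'rV[R]_d) (wstar : nat -> T -> 'rV[R]_d)
  (delta : nat -> R) :
  W !=set0 -> closed W -> convex_set W ->
  convex_fun F -> (forall x, differentiable F x) ->
  W w0 -> 0 < mu 0%N -> (1 <= J)%N ->
  (forall j, (1 <= j <= J)%N -> mu j = 2 * mu j.-1) ->
  (* random points of W with finite second moments *)
  (forall j, (1 <= j <= J)%N ->
     (forall i : 'I_d, measurable_fun setT (fun x => what j x ord0 i)) /\
     (forall x, W (what j x)) /\
     P.-integrable setT (fun x => ((enorm (what j x)) ^+ 2)%:E)) ->
  (* wstar j is the minimizer of F^{(j)} over W *)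
  (forall j, (j <= J)%N -> forall x,
     W (wstar j x) /\
     (forall v, W v -> Freg F mu w0 what j x (wstar j x)
                       <= Freg F mu w0 what j x v)) ->
  (forall j, (1 <= j <= J)%N ->
     (\int[P]_x (Freg F mu w0 what j.-1 x (what j x)
                 - Freg F mu w0 what j.-1 x (wstar j.-1 x))%:E
      <= (delta j)%:E)%E) ->
  (\int[P]_x ((\sum_(1 <= j < J.+1) mu j * enorm (wstar J x - what j x)) ^+ 2)%:E
   <= (16 * J%:R * \sum_(1 <= j < J.+1) mu j * delta j)%:E)%E.
Proof.
move=> _ _ cW cF dF _ mu0 J1 hmu hwhat hmin hdelta.
pose c : 'I_J * 'I_d -> T -> R := fun k x => what (k.1).+1 x ord0 k.2.
have mc : forall k, measurable_fun setT (c k).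
  move=> k; have hk : (1 <= (k.1).+1 <= J)%N by rewrite /= ltn_ord.
  by have [h _] := hwhat _ hk; exact: h.
have hw : forall x u, (forall k, (fun n => c k (u n)) @ \oo --> c k x) ->
    forall j, (1 <= j <= J)%N -> vcvg (fun n => what j (u n)) (what j x).
  move=> x u hc j /andP[j1 jJ] l.
  have hj : (j.-1 < J)%N by rewrite prednK.
  by have := hc (Ordinal hj, l); rewrite /c /= prednK.
have Wp : forall x j, (1 <= j <= J)%N -> W (what j x).
  by move=> x j hj; have [_ [h _]] := hwhat _ hj; exact: h.
pose Dl j x := Freg F mu w0 what j.-1 x (what j x) - Freg F mu w0 what j.-1 x (wstar j.-1 x).
have mD : forall j, (1 <= j <= J)%N -> measurable_fun setT (Dl j).
  move=> j hj; apply: (seqcont_measurable mc) => x u hc.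
  have hw' := hw x u hc.
  have hJ : (j.-1 <= J)%N by case/andP: hj => _ jJ; exact: leq_trans (leq_pred j) jJ.
  apply: cvgB.
    exact: (Freg_cvg dF hw' hJ (hw' j hj)).
  exact: (Freg_cvg dF hw' hJ (ws_cvg cW cF mu0 hmu hmin hw' hJ)).
have D0 : forall j x, (1 <= j <= J)%N -> 0 <= Dl j x.
  move=> j x hj; have hJ : (j.-1 <= J)%N.
    by case/andP: hj => _ jJ; exact: leq_trans (leq_pred j) jJ.
  have [_ hm] := hmin _ hJ x; rewrite subr_ge0; apply: hm; exact: Wp.
pose g x := (\sum_(1 <= j < J.+1) mu j * enorm (wstar J x - what j x)) ^+ 2.
have mg : measurable_fun setT g.
  apply: (seqcont_measurable mc) => x u hc.
  have hw' := hw x u hc.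
  apply: cvg_sq; apply: cvg_sum_seq => j; rewrite mem_index_iota => hj.
  apply: cvgM; first exact: cvg_cst.
  apply: enorm_cvg; apply: vcvgB; first exact: (ws_cvg cW cF mu0 hmu hmin hw' (leqnn J)).
  exact: hw'.
pose fr j x : R := if (1 <= j <= J)%N then mu j * Dl j x else 0.
have mfr : forall j, measurable_fun setT (fr j).
  move=> j; rewrite /fr; case hj: (1 <= j <= J)%N; last exact: measurable_cst.
  by apply: measurable_funM; [exact: measurable_cst | exact: mD].
have mu_ge0' : forall j, (j <= J)%N -> 0 <= mu j.
  move=> j hj; exact: (mu_ge0 mu0 hmu hj).
have fr0 : forall j x, 0 <= fr j x.
  move=> j x; rewrite /fr; case: ifP => // hj.
  rewrite mulr_ge0 ?D0 // mu_ge0' //; by case/andP: hj.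
have eS : forall x, \sum_(1 <= j < J.+1) mu j * Dl j x = \sum_(1 <= j < J.+1) fr j x.
  by move=> x; apply: eq_big_nat => j hj; rewrite /fr hj.
have J0 : (0 <= 16 * J%:R :> R)%R by rewrite mulr_ge0.
apply: (@le_trans _ _ (\int[P]_x ((16 * J%:R)%:E * \sum_(1 <= j < J.+1) (fr j x)%:E))%E).
  apply: ge0_le_integral => //.
  - by move=> x _; rewrite lee_fin sqr_ge0.
  - by apply/measurable_EFinP.
  - under eq_fun do rewrite sumEFin -EFinM.
    apply/measurable_EFinP; apply: measurable_funM; first exact: measurable_cst.
    exact: measurable_sum.
  move=> x _; rewrite sumEFin -EFinM lee_fin -eS.
  exact: (pointwise cW cF mu0 hmu (Wp x) (fun j hj => hmin j hj x)).
rewrite ge0_integralZl_EFin //; last 2 first.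
- by move=> x _; rewrite sumEFin lee_fin sumr_ge0.
- under eq_fun do rewrite sumEFin.
  by apply/measurable_EFinP; exact: measurable_sum.
rewrite ge0_integral_sum //; last 2 first.
- by move=> j; apply/measurable_EFinP.
- by move=> j x _; rewrite lee_fin.
rewrite [X in (_ <= X)%E]EFinM -sumEFin; apply: lee_wpmul2l; first by rewrite lee_fin.
rewrite big_nat_cond [X in (_ <= X)%E]big_nat_cond; apply: lee_sum => j.
rewrite andbT => hj.
have -> : (\int[P]_x (fr j x)%:E = \int[P]_x ((mu j)%:E * (Dl j x)%:E))%E.
  by apply: eq_integral => x _; rewrite /fr hj EFinM.
have hj0 : (0 <= mu j)%R by apply: mu_ge0'; case/andP: hj.
rewrite ge0_integralZl_EFin //; first last.
- by apply/measurable_EFinP; exact: mD.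
- by move=> x _; rewrite lee_fin D0.
rewrite EFinM; apply: lee_wpmul2l; last exact: hdelta.
by rewrite lee_fin; apply: mu_ge0'; case/andP: hj.
Qed.
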